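(* Let $n,d\ge 1$, $r\in[0,1]$, $\omega\ge 0$, $\alpha\in(0,1]$, $K_\omega,K_\alpha>0$, and $0<\mu\le L\le L_{\max}\le nL$, with $L_{\max}$ known. Put $\mu^r_{\omega,\alpha}=\frac{rd}{(1-r)K_\omega+rK_\alpha}$ and $K^r=(1-r)K_\omega+rK_\alpha$. For $p,\tau\in(0,1]$ let $$T(p,\tau)=\max\Big\{\sqrt{\tfrac{L}{\alpha p\mu}},\sqrt{\tfrac{L}{\alpha\tau\mu}},\sqrt{\tfrac{\sqrt{LL_{\max}}(\omega+1)\sqrt{\omega\tau}}{\alpha\sqrt n\,\mu}},\sqrt{\tfrac{\sqrt{LL_{\max}}\sqrt{\omega+1}\sqrt{\omega\tau}}{\alpha\sqrt p\sqrt n\,\mu}},\sqrt{\tfrac{L_{\max}\omega(\omega+1)^2p}{n\mu}},\sqrt{\tfrac{L_{\max}\omega}{np\mu}},\tfrac1\alpha,\tfrac1\tau,\omega+1,\tfrac1p\Big\}$$ and $M(p,\tau)=\big((1-r)K_\omega+r(K_\alpha+pd)\big)\,T(p,\tau)+d$. Choose $$p^\circ=\min\Big\{1,\frac{1}{\mu^r_{\omega,\alpha}},\Big(\frac{Ln}{L_{\max}}\Big)^{1/3}\frac{1}{\omega+1},\max\Big\{\frac1{\omega+1},\Big(\frac{Ln}{L_{\max}}\Big)^{1/2}\frac{1}{\sqrt\alpha(\omega+1)^{3/2}}\Big\}\Big\}\ (1/0=+\infty),$$ $$\tau^\circ=\min\Big\{1,\Big(\frac{Ln}{L_{\max}}\Big)^{1/3}\min\Big\{\frac{1}{\omega+1},\frac{(p^\circ)^{1/3}}{(\omega+1)^{2/3}}\Big\}\Big\}.$$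 Then, up to universal multiplicative constants (and logarithmic factors): (i) $(p^\circ,\tau^\circ)$ minimizes $M(p,\tau)$ over $p,\tau\in(0,1]$; (ii) $T(p^\circ,\tau^\circ)$ is of the order of $$T^{\mathrm{optimistic}}=\max\Big\{\sqrt{\tfrac{L\max\{1,\mu^r_{\omega,\alpha}\}}{\alpha\mu}},\sqrt{\tfrac{L^{2/3}L_{\max}^{1/3}(\omega+1)}{\alpha n^{1/3}\mu}},\sqrt{\tfrac{L^{1/2}L_{\max}^{1/2}(\omega+1)^{3/2}}{\sqrt{\alpha n}\,\mu}},\sqrt{\tfrac{L_{\max}\omega\max\{\omega+1,\mu^r_{\omega,\alpha}\}}{n\mu}},\tfrac1\alpha,\omega+1,\mu^r_{\omega,\alpha}\Big\};$$ (iii) $M(p^\circ,\tau^\circ)$ is of the order of $K^r\,T^{\mathrm{optimistic}}+d$.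
   Context: This concerns the method 2Direction for minimizing $f=\frac1n\sum_{i=1}^n f_i$ over $\mathbb R^d$ with $n$ workers, where each $f_i$ is $L_i$-smooth and convex, $L_{\max}=\max_i L_i$, $f$ is $L$-smooth and $\mu$-strongly convex. Workers use unbiased compressors with variance parameter $\omega$ ($\mathbb E[\mathcal C(x)]=x$, $\mathbb E\|\mathcal C(x)-x\|^2\le\omega\|x\|^2$) and expected density $K_\omega$ (expected density of $\mathcal C$: $\sup_x\mathbb E\|\mathcal C(x)\|_0$); the server uses a biased compressor with contraction parameter $\alpha$ ($\mathbb E\|\mathcal C(x)-x\|^2\le(1-\alpha)\|x\|^2$) and expected density $K_\alpha$. The method has hyper-parameters $p$ (a probability) and $\tau$ (a momentum). Up to logarithmic factors, $T(p,\tau)$ is the number of iterations in the strongly convex case and $M(p,\tau)$ the total communication complexity $(1-r)\cdot(\text{worker-to-server cost})+r\cdot(\text{server-to-worker cost})$, $r\in[0,1]$ weighting the two directions. Here the ratio $L_{\max}/L$ is assumed known and may be used to choose $p,\tau$. ''Of the order of'' means equal up to universal positive multiplicative constants. *)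

(* Defs.v *)
From Stdlib Require Import Reals List.
Import ListNotations.
Open Scope R_scope.

(* maximum of a finite list of reals (all entries used below are > 0,
   so the default 0 for the empty fold is irrelevant) *)
Definition Rmax_list (l : list R) : R := fold_right Rmax 0 l.

Definition cbrt (x : R) : R := Rpower x (1/3).

Definition Kr (r Kw Ka : R) : R := (1 - r) * Kw + r * Ka.
Definition mur (d : nat) (r Kw Ka : R) : R := r * INR d / Kr r Kw Ka.

Definition Tfun (n : nat) (L Lmax mu omega alpha p tau : R) : R :=
  let nn := INR n in
  Rmax_list
   [ sqrt (L / (alpha * p * mu));
     sqrt (L / (alpha * tau * mu));
     sqrt (sqrt (L * Lmax) * (omega + 1) * sqrt (omega * tau)
           / (alpha * sqrt nn * mu));
     sqrt (sqrt (L * Lmax) * sqrt (omega + 1) * sqrt (omega * tau)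
           / (alpha * sqrt p * sqrt nn * mu));
     sqrt (Lmax * omega * (omega + 1) ^ 2 * p / (nn * mu));
     sqrt (Lmax * omega / (nn * p * mu));
     1 / alpha;
     1 / tau;
     omega + 1;
     1 / p ].

Definition Mfun (n d : nat) (r Kw Ka L Lmax mu omega alpha p tau : R) : R :=
  ((1 - r) * Kw + r * (Ka + p * INR d)) * Tfun n L Lmax mu omega alpha p tau
  + INR d.

(* 1/mu^r with the convention 1/0 = +oo; since p° is a min with 1,
   replacing +oo by 1 does not change p° *)
Definition inv_mur (d : nat) (r Kw Ka : R) : R :=
  if Req_EM_T (mur d r Kw Ka) 0 then 1 else 1 / mur d r Kw Ka.

Definition p_opt (n d : nat) (r Kw Ka L Lmax omega alpha : R) : R :=
  let q := L * INR n / Lmax in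
  Rmin 1 (Rmin (inv_mur d r Kw Ka)
    (Rmin (cbrt q / (omega + 1))
          (Rmax (1 / (omega + 1))
                (sqrt q / (sqrt alpha * Rpower (omega + 1) (3/2)))))).

Definition tau_opt (n d : nat) (r Kw Ka L Lmax omega alpha : R) : R :=
  let q := L * INR n / Lmax in
  let p0 := p_opt n d r Kw Ka L Lmax omega alpha in
  Rmin 1 (cbrt q * Rmin (1 / (omega + 1))
                        (cbrt p0 / Rpower (omega + 1) (2/3))).

Definition T_optimistic (n d : nat) (r Kw Ka L Lmax mu omega alpha : R) : R :=
  let nn := INR n in
  let m := mur d r Kw Ka in
  Rmax_list
   [ sqrt (L * Rmax 1 m / (alpha * mu));
     sqrt (Rpower L (2/3) * cbrt Lmax * (omega + 1) / (alpha * cbrt nn * mu));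
     sqrt (sqrt L * sqrt Lmax * Rpower (omega + 1) (3/2)
           / (sqrt (alpha * nn) * mu));
     sqrt (Lmax * omega * Rmax (omega + 1) m / (nn * mu));
     1 / alpha;
     omega + 1;
     m ].

(* Main.v *)
Require Import Defs.
From Stdlib Require Import Reals Lra Psatz List.
Import ListNotations.
Open Scope R_scope.

Lemma Rmax_list_ge x l : In x l -> x <= Rmax_list l.
Proof.
  induction l as [|a l IH]; simpl; [tauto|].
  intros [<-|H]; [apply Rmax_l|]. eapply Rle_trans; [apply IH, H|apply Rmax_r].
Qed.

Lemma Rmax_list_le l M : 0 <= M -> Forall (fun x => x <= M) l -> Rmax_list l <= M.
Proof.
  intros HM H; induction H; simpl; [exact HM|]. apply Rmax_lub; assumption.
Qed.

Lemma Rmax_list_nonneg l : 0 <= Rmax_list l.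
Proof. induction l; simpl; [lra|]. eapply Rle_trans; [exact IHl|apply Rmax_r]. Qed.

Lemma sqrt_le_k X Y k : 0 <= Y -> 0 <= k -> X <= k^2 * Y -> sqrt X <= k * sqrt Y.
Proof.
  intros HY Hk H. rewrite <- (sqrt_square k) by lra. rewrite <- sqrt_mult by nra.
  apply sqrt_le_1_alt. nra.
Qed.

Lemma sqrt_le_max X A B k : 0 <= A -> 0 <= B -> 0 <= k -> X <= k^2 * Rmax A B ->
  sqrt X <= k * Rmax (sqrt A) (sqrt B).
Proof.
  intros HA HB Hk. unfold Rmax at 1. destruct (Rle_dec A B); intro H.
  - eapply Rle_trans; [apply (sqrt_le_k X B k); auto|].
    apply Rmult_le_compat_l; auto; apply Rmax_r.
  - eapply Rle_trans; [apply (sqrt_le_k X A k); auto|].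
    apply Rmult_le_compat_l; auto; apply Rmax_l.
Qed.

Lemma cube_le x y : 0 <= x -> 0 <= y -> x^3 <= y^3 -> x <= y.
Proof.
  intros Hx Hy H. destruct (Rle_lt_dec x y) as [|Hlt]; auto.
  exfalso. assert (y^3 < x^3). { clear H. replace (y^3) with (y*(y*y)) by ring. replace (x^3) with (x*(x*x)) by ring.
  assert (y*y <= x*x) by nra. assert (0 < x*x) by nra.
  apply Rle_lt_trans with (y*(x*x)); [apply Rmult_le_compat_l; lra| apply Rmult_lt_compat_r; lra]. } lra.
Qed.

Lemma sq_le x y : 0 <= x -> 0 <= y -> x^2 <= y^2 -> x <= y.
Proof. intros. nra. Qed.

Lemma Rmin_cases a b : Rmin a b = a \/ Rmin a b = b.
Proof. unfold Rmin; destruct Rle_dec; auto. Qed.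
Lemma Rmax_cases a b : Rmax a b = a \/ Rmax a b = b.
Proof. unfold Rmax; destruct Rle_dec; auto. Qed.

Lemma div_le a b c d : 0 < b -> 0 < d -> a * d <= c * b -> a / b <= c / d.
Proof. intros Hb Hd H.
  replace (a/b) with ((a*d)/(b*d)) by (field; lra).
  replace (c/d) with ((c*b)/(b*d)) by (field; lra).
  unfold Rdiv. apply Rmult_le_compat_r; [left; apply Rinv_0_lt_compat; nra| exact H]. Qed.


Definition Tk (k q h a sW w p t : R) : R := Rmax_list
 [ sqrt (k/(a*p)); sqrt (k/(a*t));
   sqrt (k*(w+1)*sqrt(w*t)/(a*h));
   sqrt (k*sW*sqrt(w*t)/(a*sqrt p*h));
   sqrt (k*w*(w+1)^2*p/q);
   sqrt (k*w/(q*p));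
   1/a; 1/t; w+1; 1/p ].

Definition Toptk (k q h c a sa sW w m : R) : R := Rmax_list
 [ sqrt (k*Rmax 1 m/a);
   sqrt (k*(w+1)/(a*c));
   sqrt (k*((w+1)*sW)/(sa*h));
   sqrt (k*w*Rmax (w+1) m/q);
   1/a; w+1; m ].

Lemma inl_le e l k K : In e l -> 0 <= k <= K -> k * e <= K * Rmax_list l.
Proof.
  intros Hin Hk. apply Rle_trans with (k * Rmax_list l).
  - apply Rmult_le_compat_l; [lra|]. apply Rmax_list_ge; auto.
  - apply Rmult_le_compat_r; [apply Rmax_list_nonneg|lra].
Qed.

Lemma Rdiv_nneg a b : 0 <= a -> 0 < b -> 0 <= a / b.
Proof. intros. unfold Rdiv. apply Rmult_le_pos; [lra|left; apply Rinv_0_lt_compat; lra]. Qed.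

Lemma Rinv_nneg b : 0 < b -> 0 <= / b.
Proof. intros. left; apply Rinv_0_lt_compat; lra. Qed.

Ltac pos := repeat first [apply Rdiv_lt_0_compat | apply Rmult_lt_0_compat | apply Rinv_0_lt_compat | apply pow_lt
  | apply Rdiv_nneg | apply Rmult_le_pos | apply Rinv_nneg | apply pow_le | apply sqrt_pos ]; try (solve [lra|nra]).
Ltac nneg := pos.
Ltac neq := repeat split; try (apply Rgt_not_eq; unfold Rgt; pos).
Ltac inlist := simpl; repeat (first [left; reflexivity | right]).

Lemma t3_gen k q h a sa sW w p :
  0 < k -> 1 <= q -> 0 < h -> h*h = q -> 0 < a <= 1 -> 0 < sa -> sa*sa = a ->
  0 <= w -> 0 < sW -> sW*sW = w+1 -> 0 < p <= 1 ->
  k*((w+1)*sW)/(sa*h) <= 4 * Rmax (k/(a*p)) (k*w*(w+1)^2*p/q).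
Proof.
  intros Hk Hq Hh Hh2 Ha Hsa Hsa2 Hw HsW HsW2 Hp.
  assert (Hh1 : 1 <= h) by nra.
  assert (Has : a <= sa) by nra.
  assert (HsW1 : sW <= w+1) by nra.
  set (X := k*((w+1)*sW)/(sa*h)).
  set (A := k/(a*p)). set (B := k*w*(w+1)^2*p/q).
  assert (HX : 0 < X) by (unfold X; pos).
  assert (HA : 0 < A) by (unfold A; pos).
  assert (HB : 0 <= B) by (unfold B; nneg).
  assert (HM : A <= Rmax A B /\ B <= Rmax A B) by (split; [apply Rmax_l|apply Rmax_r]).
  destruct (Rle_lt_dec 1 w) as [H1|H1].
  - assert (X^2 = k^2*(w+1)^2/(a*q) * (w+1)).
    { unfold X. rewrite <- Hh2, <- Hsa2, <- HsW2. field. neq. }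
    assert (A*B = k^2*(w+1)^2/(a*q) * w).
    { unfold A, B. field. neq. }
    assert (0 < k^2*(w+1)^2/(a*q)) by (apply Rdiv_lt_0_compat; nra).
    assert (X^2 <= 2*(A*B)) by nra.
    assert (A*B <= Rmax A B ^2) by (simpl; nra).
    apply sq_le; [lra|nra|nra].
  - apply Rle_trans with (4*A); [|nra].
    replace (4*A) with ((4*k)/(a*p)) by (unfold A; field; neq).
    unfold X. apply div_le; [pos|pos|].
    assert ((w+1)*sW <= 4) by nra.
    assert (k*((w+1)*sW) <= 4*k) by nra.
    assert (a*p <= sa*h) by nra.
    apply Rle_trans with (4*k*(a*p)).
    + apply Rmult_le_compat_r; [nneg|lra].
    + apply Rmult_le_compat_l; [lra|lra].
Qed.

Lemma le_div_r x y p : 0 < p -> x * p <= y -> x <= y / p.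
Proof. intros Hp H. apply (Rmult_le_reg_r p); [lra|]. unfold Rdiv. rewrite Rmult_assoc, Rinv_l; lra. Qed.

Lemma c_ge1 c q : 0 < c -> c^3 = q -> 1 <= q -> 1 <= c.
Proof. intros Hc H Hq. apply cube_le; [lra|lra|]. rewrite H; simpl; lra. Qed.

Lemma max_cube A B X : 0 <= A -> 0 <= B -> 0 <= X -> X^3 <= 2*(A*B^2) -> X <= 4 * Rmax A B.
Proof.
  intros HA HB HX H. set (M := Rmax A B).
  assert (A <= M) by apply Rmax_l. assert (B <= M) by apply Rmax_r.
  assert (B^2 <= M^2) by (simpl; nra).
  assert (A*B^2 <= M*M^2) by (apply Rmult_le_compat; nneg).
  apply cube_le; [lra|nneg|]. 
  assert (0 <= M*M^2) by nneg.
  replace ((4*M)^3) with (64*(M*M^2)) by ring. lra.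
Qed.

Lemma t2_gen k q h c a w t :
  0 < k -> 1 <= q -> 0 < h -> h*h = q -> 0 < c -> c^3 = q -> 0 < a <= 1 ->
  0 <= w -> 0 < t <= 1 ->
  k*(w+1)/(a*c) <= 4 * Rmax (k/(a*t)) (k*(w+1)*sqrt(w*t)/(a*h)).
Proof.
  intros Hk Hq Hh Hh2 Hc Hc3 Ha Hw Ht.
  assert (Hc1 : 1 <= c) by (eapply c_ge1; eauto).
  set (s := sqrt (w*t)).
  assert (Hs : s*s = w*t) by (apply sqrt_sqrt; nneg).
  assert (Hs0 : 0 <= s) by apply sqrt_pos.
  set (X := k*(w+1)/(a*c)). set (A := k/(a*t)). set (B := k*(w+1)*s/(a*h)).
  assert (HX : 0 < X) by (unfold X; pos).
  assert (HA : 0 < A) by (unfold A; pos).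
  assert (HB : 0 <= B) by (unfold B; nneg).
  destruct (Rle_lt_dec 1 w) as [H1|H1].
  - apply max_cube; try lra.
    set (K0 := k^3*(w+1)^2/(a^3*q)).
    assert (HK0 : 0 < K0) by (unfold K0; pos).
    assert (E1 : X^3 = K0*(w+1)) by (unfold X, K0; rewrite <- Hc3; field; neq).
    assert (E2 : A*B^2 = K0*w).
    { replace (B^2) with (k^2*(w+1)^2*(s*s)/(a^2*(h*h))) by (unfold B; field; neq).
      rewrite Hs, Hh2. unfold A, K0. field. neq. }
    rewrite E1, E2. nra.
  - apply Rle_trans with (2*A); [|assert (A <= Rmax A B) by apply Rmax_l; lra].
    replace (2*A) with (2*k/(a*t)) by (unfold A; field; neq).
    unfold X. apply div_le; [pos|pos|].
    assert ((w+1)*t <= 2*c) by nra.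
    replace (k*(w+1)*(a*t)) with ((k*a)*((w+1)*t)) by ring.
    replace (2*k*(a*c)) with ((k*a)*(2*c)) by ring.
    apply Rmult_le_compat_l; [nneg|lra].
Qed.

Lemma F2p p m : 0 < p <= 1 -> 0 <= m -> Rmax 1 m <= (1+p*m)^2/p /\ m <= (1+p*m)^2/p.
Proof.
  intros Hp Hm.
  assert (m <= (1+p*m)^2/p) by (apply le_div_r; [lra|nra]).
  split; auto. apply Rmax_lub; auto. apply le_div_r; [lra|nra].
Qed.

Lemma t4_gen k q w m p :
  0 < k -> 1 <= q -> 0 <= w -> 0 <= m -> 0 < p <= 1 ->
  k*w*Rmax (w+1) m/q <= (1+p*m)^2 * Rmax (k*w*(w+1)^2*p/q) (k*w/(q*p)).
Proof.
  intros Hk Hq Hw Hm Hp.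
  set (A := k*w*(w+1)^2*p/q). set (B := k*w/(q*p)).
  assert (HA : 0 <= A) by (unfold A; nneg). assert (HB : 0 <= B) by (unfold B; nneg).
  assert (HAM : A <= Rmax A B) by apply Rmax_l. assert (HBM : B <= Rmax A B) by apply Rmax_r.
  assert (HF : 1 <= (1+p*m)^2) by nra.
  destruct (Rmax_cases (w+1) m) as [E|E]; rewrite E.
  - assert (k*w*(w+1)/q <= Rmax A B).
    { apply sq_le; [nneg|lra|].
      replace ((k*w*(w+1)/q)^2) with (A*B) by (unfold A, B; field; neq).
      simpl. nra. }
    assert (0 <= Rmax A B) by lra. nra.
  - apply Rle_trans with ((1+p*m)^2 * B); [|apply Rmult_le_compat_l; nneg].
    destruct (F2p p m Hp Hm) as [_ Hm2].
    replace ((1+p*m)^2 * B) with (k*w*((1+p*m)^2/p)/q) by (unfold B; field; neq).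
    unfold Rdiv at 1 3. apply Rmult_le_compat_r; [nneg|]. apply Rmult_le_compat_l; nneg.
Qed.

Lemma C_bound k q h c a sa sW w m p t :
  0 < k -> 1 <= q -> 0 < h -> h*h = q -> 0 < c -> c^3 = q -> 0 < a <= 1 -> 0 < sa -> sa*sa = a ->
  0 <= w -> 0 < sW -> sW*sW = w+1 -> 0 <= m -> 0 < p <= 1 -> 0 < t <= 1 ->
  Toptk k q h c a sa sW w m <= 2*(1+p*m) * Tk k q h a sW w p t.
Proof.
  intros Hk Hq Hh Hh2 Hc Hc3 Ha Hsa Hsa2 Hw HsW HsW2 Hm Hp Ht.
  assert (HF : 1 <= 1+p*m) by nra.
  assert (HT : 0 <= Tk k q h a sW w p t) by apply Rmax_list_nonneg.
  assert (Hin : forall e, In e [ sqrt (k/(a*p)); sqrt (k/(a*t));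
   sqrt (k*(w+1)*sqrt(w*t)/(a*h));
   sqrt (k*sW*sqrt(w*t)/(a*sqrt p*h));
   sqrt (k*w*(w+1)^2*p/q);
   sqrt (k*w/(q*p));
   1/a; 1/t; w+1; 1/p ] -> e <= Tk k q h a sW w p t) by (intros; apply Rmax_list_ge; auto).
  assert (Hmx : forall e1 e2 K, e1 <= Tk k q h a sW w p t -> e2 <= Tk k q h a sW w p t -> 0 <= K <= 2*(1+p*m) ->
     K * Rmax e1 e2 <= 2*(1+p*m) * Tk k q h a sW w p t).
  { intros e1 e2 K H1 H2 HK. apply Rle_trans with (K * Tk k q h a sW w p t).
    - apply Rmult_le_compat_l; [lra|]. apply Rmax_lub; auto.
    - apply Rmult_le_compat_r; lra. }
  assert (H1e : forall e, e <= Tk k q h a sW w p t -> e <= 2*(1+p*m) * Tk k q h a sW w p t).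
  { intros e He. apply Rle_trans with (1 * Tk k q h a sW w p t); [lra|]. apply Rmult_le_compat_r; lra. }
  unfold Toptk. apply Rmax_list_le; [nneg|]. repeat apply Forall_cons; try apply Forall_nil.
  - apply Rle_trans with ((1+p*m) * sqrt (k/(a*p))).
    + apply sqrt_le_k; [nneg|lra|].
      destruct (F2p p m Hp Hm) as [H1 _].
      replace ((1+p*m)^2*(k/(a*p))) with (k*((1+p*m)^2/p)/a) by (field; neq).
      unfold Rdiv at 1 3. apply Rmult_le_compat_r; [nneg|]. apply Rmult_le_compat_l; nneg.
    + apply Rle_trans with ((1+p*m) * Tk k q h a sW w p t).
      * apply Rmult_le_compat_l; [lra|]. apply Hin. inlist.
      * apply Rmult_le_compat_r; lra.
  - apply Rle_trans with (2 * Rmax (sqrt (k/(a*t))) (sqrt (k*(w+1)*sqrt(w*t)/(a*h)))).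
    + apply sqrt_le_max; [nneg|nneg|lra|].
      replace (2^2) with 4 by ring. apply (t2_gen k q h c); auto.
    + apply Hmx; [apply Hin; inlist|apply Hin; inlist|lra].
  - apply Rle_trans with (2 * Rmax (sqrt (k/(a*p))) (sqrt (k*w*(w+1)^2*p/q))).
    + apply sqrt_le_max; [nneg|nneg|lra|].
      replace (2^2) with 4 by ring. apply (t3_gen k q h a sa sW w p); auto.
    + apply Hmx; [apply Hin; inlist|apply Hin; inlist|lra].
  - apply Rle_trans with ((1+p*m) * Rmax (sqrt (k*w*(w+1)^2*p/q)) (sqrt (k*w/(q*p)))).
    + apply sqrt_le_max; [nneg|nneg|lra|]. apply t4_gen; auto.
    + apply Hmx; [apply Hin; inlist|apply Hin; inlist|lra].
  - apply H1e, Hin; inlist.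
  - apply H1e, Hin; inlist.
  - apply Rle_trans with ((1+p*m) * (1/p)).
    + replace ((1+p*m)*(1/p)) with ((1+p*m)/p) by (field; neq). apply le_div_r; nra.
    + apply Rle_trans with ((1+p*m) * Tk k q h a sW w p t).
      * apply Rmult_le_compat_l; [lra|]. apply Hin. inlist.
      * apply Rmult_le_compat_r; lra.
Qed.



Definition pk c h sa sW w im : R :=
  Rmin 1 (Rmin im (Rmin (c/(w+1)) (Rmax (1/(w+1)) (h/(sa*((w+1)*sW)))))).
Definition tk c W23 pc w : R := Rmin 1 (c * Rmin (1/(w+1)) (pc/W23)).

Lemma inv_le x y : 0 < x -> 0 < y -> x <= y -> 1/y <= 1/x.
Proof. intros. apply div_le; lra. Qed.

Lemma div_le1 x c : 0 <= x -> 1 <= c -> x / c <= x.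
Proof. intros. assert (/c <= 1) by (rewrite <- Rinv_1; apply Rinv_le_contravar; lra).
  unfold Rdiv. rewrite <- (Rmult_1_r x) at 2. apply Rmult_le_compat_l; lra. Qed.

Lemma p0_facts c h sa sW w im m :
  1 <= c -> 1 <= h -> 0 < sa -> 0 < sW -> 0 <= w -> 0 < im -> 0 <= m -> im*m <= 1 -> 1 <= im*Rmax 1 m ->
  let p0 := pk c h sa sW w im in
  0 < p0 <= 1 /\ p0 <= im /\ p0 <= c/(w+1) /\
  (p0 <= 1/(w+1) \/ p0 <= h/(sa*((w+1)*sW))) /\
  1/p0 <= Rmax (w+1) m /\ Rmax 1 m <= 1/p0 /\
  (p0 = 1 \/ p0 = im \/ p0 = c/(w+1) \/ h/(sa*((w+1)*sW)) <= p0).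
Proof.
  intros Hc Hh Hsa HsW Hw Him Hm Himm Him1 p0.
  assert (Hy : 0 < h/(sa*((w+1)*sW))) by pos.
  assert (Hcw : 0 < c/(w+1)) by pos.
  assert (H1w : 0 < 1/(w+1)) by pos.
  assert (Hcase : p0 = 1 \/ p0 = im \/ p0 = c/(w+1) \/ p0 = Rmax (1/(w+1)) (h/(sa*((w+1)*sW)))).
  { unfold p0, pk. destruct (Rmin_cases 1 (Rmin im (Rmin (c/(w+1)) (Rmax (1/(w+1)) (h/(sa*((w+1)*sW))))))) as [E|E]; rewrite E; auto.
    destruct (Rmin_cases im (Rmin (c/(w+1)) (Rmax (1/(w+1)) (h/(sa*((w+1)*sW)))))) as [E2|E2]; rewrite E2; auto.
    destruct (Rmin_cases (c/(w+1)) (Rmax (1/(w+1)) (h/(sa*((w+1)*sW))))) as [E3|E3]; rewrite E3; auto. }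
  assert (Hle1 : p0 <= 1) by apply Rmin_l.
  assert (Hle2 : p0 <= im) by (eapply Rle_trans; [apply Rmin_r|apply Rmin_l]).
  assert (Hle3 : p0 <= c/(w+1)) by (eapply Rle_trans; [apply Rmin_r|]; eapply Rle_trans; [apply Rmin_r|apply Rmin_l]).
  assert (Hle4 : p0 <= Rmax (1/(w+1)) (h/(sa*((w+1)*sW)))) by
    (eapply Rle_trans; [apply Rmin_r|]; eapply Rle_trans; [apply Rmin_r|apply Rmin_r]).
  assert (Hpos : 0 < p0).
  { destruct Hcase as [E|[E|[E|E]]]; rewrite E; try lra. eapply Rlt_le_trans; [exact Hy|apply Rmax_r]. }
  assert (HRm : Rmax 1 m <= 1/p0).
  { apply Rmax_lub.
    - replace 1 with (1/1) at 1 by field. apply inv_le; lra.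
    - apply le_div_r; [lra|]. nra. }
  repeat split; try lra.
  - destruct (Rmax_cases (1/(w+1)) (h/(sa*((w+1)*sW)))) as [E|E]; rewrite E in Hle4; auto.
  - assert (HW : 1 <= Rmax (w+1) m) by (eapply Rle_trans; [|apply Rmax_l]; lra).
    destruct Hcase as [E|[E|[E|E]]]; rewrite E.
    + lra.
    + eapply Rle_trans with (Rmax 1 m).
      * apply (Rmult_le_reg_l im); [lra|]. replace (im*(1/im)) with 1 by (field; lra). lra.
      * apply Rmax_lub; [lra|apply Rmax_r].
    + replace (1/(c/(w+1))) with ((w+1)/c) by (field; lra).
      eapply Rle_trans; [|apply Rmax_l]. apply div_le1; lra.
    + eapply Rle_trans; [|apply Rmax_l].
      assert (1/(w+1) <= Rmax (1/(w+1)) (h/(sa*((w+1)*sW)))) by apply Rmax_l.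
      eapply Rle_trans; [apply inv_le; [exact H1w| pos | exact H]|]. right; field; lra.
  - destruct Hcase as [E|[E|[E|E]]]; auto. right; right; right. rewrite E; apply Rmax_r.
Qed.

Lemma div_le_l x y p : 0 < p -> x <= y * p -> x / p <= y.
Proof. intros Hp H. apply (Rmult_le_reg_r p); [lra|]. unfold Rdiv. rewrite Rmult_assoc, Rinv_l; lra. Qed.

Lemma t0_facts c W23 pc w :
  1 <= c -> 0 < W23 -> 0 < pc -> 0 <= w ->
  let t0 := tk c W23 pc w in
  0 < t0 <= 1 /\ t0 <= c/(w+1) /\ t0 <= c*pc/W23 /\
  (t0 = 1 \/ t0 = c/(w+1) \/ t0 = c*pc/W23).
Proof.
  intros Hc HW Hpc Hw t0.
  assert (E1 : c*(1/(w+1)) = c/(w+1)) by (field; lra).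
  assert (E2 : c*(pc/W23) = c*pc/W23) by (field; lra).
  assert (Hm1 : c * Rmin (1/(w+1)) (pc/W23) <= c/(w+1)) by
    (rewrite <- E1; apply Rmult_le_compat_l; [lra|apply Rmin_l]).
  assert (Hm2 : c * Rmin (1/(w+1)) (pc/W23) <= c*pc/W23) by
    (rewrite <- E2; apply Rmult_le_compat_l; [lra|apply Rmin_r]).
  assert (Hcase : t0 = 1 \/ t0 = c/(w+1) \/ t0 = c*pc/W23).
  { unfold t0, tk. destruct (Rmin_cases 1 (c * Rmin (1/(w+1)) (pc/W23))) as [E|E]; rewrite E; auto.
    destruct (Rmin_cases (1/(w+1)) (pc/W23)) as [E'|E']; rewrite E'; auto. }
  assert (t0 <= 1) by apply Rmin_l.
  assert (t0 <= c * Rmin (1/(w+1)) (pc/W23)) by apply Rmin_r.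
  assert (0 < c/(w+1)) by pos. assert (0 < c*pc/W23) by pos.
  repeat split; try lra.
Qed.

Lemma R_bound W23 pc W p0 :
  1 <= W -> 0 < p0 -> 0 < W23 -> 0 < pc -> W23^3 = W^2 -> pc^3 = p0 ->
  (W23/pc)^3 = W^2/p0 /\ W23/pc <= Rmax W (1/p0).
Proof.
  intros HW Hp HW23 Hpc E1 E2.
  assert (ER : (W23/pc)^3 = W^2/p0) by (rewrite <- E1, <- E2; field; lra).
  split; auto.
  destruct (Rle_lt_dec 1 (p0*W)) as [H|H].
  - eapply Rle_trans; [|apply Rmax_l]. apply cube_le; [pos|lra|].
    rewrite ER. apply div_le_l; [lra|].
    assert (0 < W^2) by pos. replace (W^3*p0) with (W^2*(p0*W)) by ring. nra.
  - eapply Rle_trans; [|apply Rmax_r]. apply cube_le; [pos|pos|].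
    rewrite ER. replace ((1/p0)^3) with (1/p0^3) by (field; lra).
    apply div_le; [lra|pos|]. replace (W^2*p0^3) with ((p0*W)^2*p0) by ring.
    assert (0 < p0*W) by pos. assert ((p0*W)^2 <= 1) by (simpl; nra).
    rewrite Rmult_1_l. apply Rle_trans with (1*p0); [apply Rmult_le_compat_r; lra | lra].
Qed.

Lemma Y_bound c q h w sW s sp p0 t0 pc W23 :
  1 <= c -> c^3 = q -> 0 < h -> h*h = q -> 0 < sW -> sW*sW = w+1 -> 0 <= w ->
  0 <= s -> s*s = w*t0 -> 0 < t0 -> 0 < sp -> sp*sp = p0 -> 0 < p0 ->
  t0 <= c*pc/W23 -> 0 < W23 -> 0 < pc -> W23^3 = (w+1)^2 -> pc^3 = p0 ->
  sW*s/(sp*h) <= (w+1)/c \/ sW*s/(sp*h) <= 1/p0.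
Proof.
  intros Hc Hc3 Hh Hh2 HsW HsW2 Hw Hs0 Hs Ht Hsp Hsp2 Hp Htc HW23 Hpc E1 E2.
  set (W := w+1) in *.
  assert (HW : 1 <= W) by (unfold W; lra).
  destruct (R_bound W23 pc W p0 HW Hp HW23 Hpc E1 E2) as [ER _].
  set (R := W23/pc) in *.
  assert (HR : 0 < R) by (unfold R; pos).
  assert (HtR : t0*R <= c).
  { replace (c*pc/W23) with (c/R) in Htc by (unfold R; field; lra).
    apply (Rmult_le_compat_r R) in Htc; [|lra]. replace (c/R*R) with c in Htc by (field; lra). exact Htc. }
  assert (HwtR : w*t0*R <= W*c).
  { replace (w*t0*R) with (w*(t0*R)) by ring.
    apply Rle_trans with (W*(t0*R)); [apply Rmult_le_compat_r; [pos|unfold W; lra]|apply Rmult_le_compat_l; lra]. }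
  set (Y := sW*s/(sp*h)).
  assert (HY : 0 <= Y) by (unfold Y; pos).
  assert (EY : Y^2 = W*(w*t0)/(p0*q)).
  { unfold Y. replace ((sW*s/(sp*h))^2) with ((sW*sW)*(s*s)/((sp*sp)*(h*h))) by (field; neq).
    rewrite HsW2, Hs, Hsp2, Hh2. reflexivity. }
  assert (Yle : Y^2 <= W^2/(R*p0*c^2)).
  { rewrite EY. apply div_le; [rewrite <- Hc3; pos|pos|].
    rewrite <- Hc3.
    replace (W*(w*t0)*(R*p0*c^2)) with ((W*p0*c^2)*(w*t0*R)) by ring.
    replace (W^2*(p0*c^3)) with ((W*p0*c^2)*(W*c)) by ring.
    apply Rmult_le_compat_l; [pos|lra]. }
  destruct (Rle_lt_dec 1 (p0*W)) as [H|H].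
  - left.
    assert (RP : 1 <= R*p0).
    { apply cube_le; [lra|pos|].
      replace ((R*p0)^3) with (R^3*p0^3) by ring. rewrite ER.
      replace (W^2/p0*p0^3) with ((p0*W)^2) by (field; lra).
      assert (1 <= (p0*W)^2) by (simpl; nra). simpl; lra. }
    apply sq_le; [lra|pos|]. eapply Rle_trans; [exact Yle|].
    replace ((W/c)^2) with (W^2/c^2) by (field; lra).
    apply div_le; [pos|pos|].
    replace (W^2*(R*p0*c^2)) with ((W^2*c^2)*(R*p0)) by ring.
    rewrite <- (Rmult_1_r (W^2*c^2)) at 1. apply Rmult_le_compat_l; [pos|lra].
  - right.
    assert (RW : W^2*p0 <= R).
    { apply cube_le; [pos|lra|]. rewrite ER. apply le_div_r; [lra|].
      replace ((W^2*p0)^3*p0) with (W^2*(p0*W)^4) by ring.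
      assert (0 < p0*W) by pos.
      assert ((p0*W)^4 <= 1).
      { replace ((p0*W)^4) with (((p0*W)^2)^2) by ring.
        assert ((p0*W)^2 <= 1) by (simpl; nra). assert (0 <= (p0*W)^2) by pos. simpl; nra. }
      rewrite <- (Rmult_1_r (W^2)) at 2. apply Rmult_le_compat_l; [pos|lra]. }
    apply sq_le; [lra|pos|]. eapply Rle_trans; [exact Yle|].
    replace ((1/p0)^2) with (1/p0^2) by (field; lra).
    apply div_le; [pos|pos|].
    assert (1 <= c^2) by (simpl; nra).
    replace (W^2*p0^2) with ((W^2*p0)*p0) by ring.
    apply Rle_trans with (R*p0); [apply Rmult_le_compat_r; lra|].
    replace (1*(R*p0*c^2)) with ((R*p0)*c^2) by ring.
    rewrite <- (Rmult_1_r (R*p0)) at 1. apply Rmult_le_compat_l; [pos|lra].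
Qed.

Lemma div_mono x y q : 0 < q -> x <= y -> x/q <= y/q.
Proof. intros. unfold Rdiv. apply Rmult_le_compat_r; [left; apply Rinv_0_lt_compat|]; lra. Qed.

Ltac via Y Hin := apply Rle_trans with (sqrt Y); [apply sqrt_le_1_alt | apply Hin; inlist].

Lemma A_bound k q h c a sa sW w m im pc W23 :
  0 < k -> 1 <= q -> 0 < h -> h*h = q -> 0 < c -> c^3 = q -> 0 < a <= 1 -> 0 < sa -> sa*sa = a ->
  0 <= w -> 0 < sW -> sW*sW = w+1 -> 0 <= m -> 0 < im -> im*m <= 1 -> 1 <= im*Rmax 1 m ->
  0 < pc -> pc^3 = pk c h sa sW w im -> 0 < W23 -> W23^3 = (w+1)^2 ->
  Tk k q h a sW w (pk c h sa sW w im) (tk c W23 pc w) <= Toptk k q h c a sa sW w m.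
Proof.
  intros Hk Hq Hh Hh2 Hc Hc3 Ha Hsa Hsa2 Hw HsW HsW2 Hm Him Himm Him1 Hpc Epc HW23 EW23.
  set (p0 := pk c h sa sW w im) in *. set (t0 := tk c W23 pc w).
  assert (Hc1 : 1 <= c) by (eapply c_ge1; eauto).
  assert (Hh1 : 1 <= h) by nra.
  destruct (p0_facts c h sa sW w im m) as [Hp0 [Hpim [Hpcw [Hp4 [Hinvp [HRm Hpcase]]]]]]; auto; try lra.
  fold p0 in Hp0, Hpim, Hpcw, Hp4, Hinvp, HRm, Hpcase.
  destruct (t0_facts c W23 pc w) as [Ht0 [Htc1 [Htc2 Htcase]]]; auto; try lra.
  fold t0 in Ht0, Htc1, Htc2, Htcase.
  set (Topt := Toptk k q h c a sa sW w m).
  assert (Hin : forall e, In e [ sqrt (k*Rmax 1 m/a);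
   sqrt (k*(w+1)/(a*c));
   sqrt (k*((w+1)*sW)/(sa*h));
   sqrt (k*w*Rmax (w+1) m/q);
   1/a; w+1; m ] -> e <= Topt) by (intros; apply Rmax_list_ge; auto).
  assert (HWm : Rmax (w+1) m <= Topt) by (apply Rmax_lub; apply Hin; inlist).
  assert (HT0 : 0 <= Topt) by apply Rmax_list_nonneg.
  assert (HR1 : 1 <= Rmax 1 m) by apply Rmax_l.
  assert (Hka : k/(a*1) <= k*Rmax 1 m/a).
  { apply div_le; [pos|lra|]. replace (k*Rmax 1 m*(a*1)) with ((k*a)*Rmax 1 m) by ring.
    rewrite <- (Rmult_1_r (k*a)) at 1. apply Rmult_le_compat_l; [pos|lra]. }
  assert (S1 : sqrt (k/(a*p0)) <= Topt).
  { destruct Hpcase as [E|[E|[E|E]]].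
    - rewrite E. via (k*Rmax 1 m/a) Hin. exact Hka.
    - rewrite E. via (k*Rmax 1 m/a) Hin. apply div_le; [pos|lra|].
      replace (k*Rmax 1 m*(a*im)) with ((k*a)*(im*Rmax 1 m)) by ring.
      rewrite <- (Rmult_1_r (k*a)) at 1. apply Rmult_le_compat_l; [pos|lra].
    - rewrite E. via (k*(w+1)/(a*c)) Hin. right; field; neq.
    - via (k*((w+1)*sW)/(sa*h)) Hin.
      apply Rle_trans with (k/(a*(h/(sa*((w+1)*sW))))).
      + apply div_le; [pos|pos|]. apply Rmult_le_compat_l; [pos|]. apply Rmult_le_compat_l; lra.
      + right. rewrite <- Hsa2. field. neq. }
  assert (HR := R_bound W23 pc (w+1) p0 ltac:(lra) ltac:(lra) HW23 Hpc EW23 Epc).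
  destruct HR as [ER HRb].
  assert (HRm2 : W23/pc <= Rmax (w+1) m).
  { eapply Rle_trans; [exact HRb|]. apply Rmax_lub; [apply Rmax_l|exact Hinvp]. }
  unfold Tk. apply Rmax_list_le; [exact HT0|]. repeat apply Forall_cons; try apply Forall_nil.
  - exact S1.
  - destruct Htcase as [E|[E|E]]; rewrite E.
    + via (k*Rmax 1 m/a) Hin. exact Hka.
    + via (k*(w+1)/(a*c)) Hin. right; field; neq.
    + replace (k/(a*(c*pc/W23))) with (k*(W23/pc)/(a*c)) by (field; neq).
      destruct (Rmax_cases (w+1) (1/p0)) as [E2|E2]; rewrite E2 in HRb.
      * via (k*(w+1)/(a*c)) Hin. unfold Rdiv at 1 3. apply Rmult_le_compat_r; [pos|].
        apply Rmult_le_compat_l; lra.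
      * eapply Rle_trans; [|exact S1]. apply sqrt_le_1_alt.
        apply Rle_trans with (k*(1/p0)/(a*c)).
        -- unfold Rdiv at 1 3. apply Rmult_le_compat_r; [pos|]. apply Rmult_le_compat_l; lra.
        -- apply div_le; [pos|pos|]. 
           replace (k*(1/p0)*(a*p0)) with (k*a) by (field; lra).
           replace (k*(a*c)) with ((k*a)*c) by ring.
           rewrite <- (Rmult_1_r (k*a)) at 1. apply Rmult_le_compat_l; [pos|lra].
  - via (k*(w+1)/(a*c)) Hin.
    set (s := sqrt (w*t0)).
    assert (Hs : s*s = w*t0) by (apply sqrt_sqrt; pos).
    assert (Hs0 : 0 <= s) by apply sqrt_pos.
    assert (Hsc : s*c <= h).
    { apply sq_le; [pos|lra|].
      assert (w*t0 <= c).
      { apply Rle_trans with ((w+1)*t0); [apply Rmult_le_compat_r; lra|].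
        apply (Rmult_le_compat_l (w+1)) in Htc1; [|lra].
        replace ((w+1)*(c/(w+1))) with c in Htc1 by (field; lra). lra. }
      replace ((s*c)^2) with ((s*s)*c^2) by ring. replace (h^2) with (h*h) by ring.
      rewrite Hs, Hh2, <- Hc3. replace (c^3) with (c*c^2) by ring.
      apply Rmult_le_compat_r; [pos|lra]. }
    apply div_le; [pos|pos|].
    replace (k*(w+1)*s*(a*c)) with ((k*(w+1)*a)*(s*c)) by ring.
    replace (k*(w+1)*(a*h)) with ((k*(w+1)*a)*h) by ring.
    apply Rmult_le_compat_l; [pos|lra].
  - set (s := sqrt (w*t0)).
    assert (Hs : s*s = w*t0) by (apply sqrt_sqrt; pos).
    assert (Hs0 : 0 <= s) by apply sqrt_pos.
    set (sp := sqrt p0).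
    assert (Hsp : sp*sp = p0) by (apply sqrt_sqrt; lra).
    assert (Hsp0 : 0 < sp) by (apply sqrt_lt_R0; lra).
    replace (k*sW*s/(a*sp*h)) with ((k/a)*(sW*s/(sp*h))) by (field; neq).
    destruct (Y_bound c q h w sW s sp p0 t0 pc W23) as [HY|HY]; auto; try lra.
    + via (k*(w+1)/(a*c)) Hin.
      replace (k*(w+1)/(a*c)) with ((k/a)*((w+1)/c)) by (field; neq).
      apply Rmult_le_compat_l; [pos|lra].
    + eapply Rle_trans; [|exact S1]. apply sqrt_le_1_alt.
      replace (k/(a*p0)) with ((k/a)*(1/p0)) by (field; neq).
      apply Rmult_le_compat_l; [pos|lra].
  - destruct Hp4 as [Hp4|Hp4].
    + via (k*w*Rmax (w+1) m/q) Hin.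
      apply div_mono; [lra|].
      replace (k*w*(w+1)^2*p0) with ((k*w)*((w+1)^2*p0)) by ring.
      apply Rmult_le_compat_l; [pos|].
      apply Rle_trans with (w+1); [|apply Rmax_l].
      apply (Rmult_le_compat_l ((w+1)^2)) in Hp4; [|pos].
      replace ((w+1)^2*(1/(w+1))) with (w+1) in Hp4 by (field; lra). exact Hp4.
    + via (k*((w+1)*sW)/(sa*h)) Hin.
      apply Rle_trans with (k*w*(w+1)^2*(h/(sa*((w+1)*sW)))/q).
      * unfold Rdiv at 1 2. apply Rmult_le_compat_r; [pos|]. apply Rmult_le_compat_l; [pos|exact Hp4].
      * replace (k*w*(w+1)^2*(h/(sa*((w+1)*sW)))/q) with ((k*(w+1)/sa)*(w*h/(sW*q))) by (field; neq).
        replace (k*((w+1)*sW)/(sa*h)) with ((k*(w+1)/sa)*(sW/h)) by (field; neq).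
        apply Rmult_le_compat_l; [pos|]. apply div_le; [pos|pos|].
        replace (w*h*h) with (w*q) by (rewrite <- Hh2; ring).
        replace (sW*(sW*q)) with ((w+1)*q) by (rewrite <- HsW2; ring).
        apply Rmult_le_compat_r; lra.
  - via (k*w*Rmax (w+1) m/q) Hin.
    replace (k*w/(q*p0)) with (k*w*(1/p0)/q) by (field; neq).
    apply div_mono; [lra|]. apply Rmult_le_compat_l; [pos|exact Hinvp].
  - apply Hin; inlist.
  - eapply Rle_trans; [|exact HWm].
    destruct Htcase as [E|[E|E]]; rewrite E.
    + replace (1/1) with 1 by field. apply Rle_trans with (w+1); [lra|apply Rmax_l].
    + replace (1/(c/(w+1))) with ((w+1)/c) by (field; neq).
      apply Rle_trans with (w+1); [apply div_le1; lra|apply Rmax_l].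
    + replace (1/(c*pc/W23)) with ((W23/pc)/c) by (field; neq).
      apply Rle_trans with (W23/pc); [apply div_le1; [pos|lra]|exact HRm2].
  - apply Hin; inlist.
  - eapply Rle_trans; [exact Hinvp|exact HWm].
Qed.

Lemma B_bound k q h c a sa sW w m im pc W23 :
  0 < k -> 1 <= q -> 0 < h -> h*h = q -> 0 < c -> c^3 = q -> 0 < a <= 1 -> 0 < sa -> sa*sa = a ->
  0 <= w -> 0 < sW -> sW*sW = w+1 -> 0 <= m -> 0 < im -> im*m <= 1 -> 1 <= im*Rmax 1 m ->
  0 < pc -> 0 < W23 ->
  Toptk k q h c a sa sW w m <= 2 * Tk k q h a sW w (pk c h sa sW w im) (tk c W23 pc w).
Proof.
  intros Hk Hq Hh Hh2 Hc Hc3 Ha Hsa Hsa2 Hw HsW HsW2 Hm Him Himm Him1 Hpc HW23.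
  set (p0 := pk c h sa sW w im) in *. set (t0 := tk c W23 pc w).
  assert (Hc1 : 1 <= c) by (eapply c_ge1; eauto).
  assert (Hh1 : 1 <= h) by nra.
  destruct (p0_facts c h sa sW w im m) as [Hp0 [Hpim [Hpcw [Hp4 [Hinvp [HRm Hpcase]]]]]]; auto; try lra.
  fold p0 in Hp0, Hpim, Hpcw, Hp4, Hinvp, HRm, Hpcase.
  destruct (t0_facts c W23 pc w) as [Ht0 [Htc1 [Htc2 Htcase]]]; auto; try lra.
  fold t0 in Ht0, Htc1, Htc2, Htcase.
  set (T := Tk k q h a sW w p0 t0).
  assert (HT : 0 <= T) by apply Rmax_list_nonneg.
  assert (Hin : forall e, In e [ sqrt (k/(a*p0)); sqrt (k/(a*t0));
   sqrt (k*(w+1)*sqrt(w*t0)/(a*h));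
   sqrt (k*sW*sqrt(w*t0)/(a*sqrt p0*h));
   sqrt (k*w*(w+1)^2*p0/q);
   sqrt (k*w/(q*p0));
   1/a; 1/t0; w+1; 1/p0 ] -> e <= 2*T).
  { intros e He. apply Rle_trans with T; [apply Rmax_list_ge; auto|lra]. }
  assert (Hin1 : forall e, In e [ sqrt (k/(a*p0)); sqrt (k/(a*t0));
   sqrt (k*(w+1)*sqrt(w*t0)/(a*h));
   sqrt (k*sW*sqrt(w*t0)/(a*sqrt p0*h));
   sqrt (k*w*(w+1)^2*p0/q);
   sqrt (k*w/(q*p0));
   1/a; 1/t0; w+1; 1/p0 ] -> e <= T) by (intros; apply Rmax_list_ge; auto).
  unfold Toptk. apply Rmax_list_le; [lra|]. repeat apply Forall_cons; try apply Forall_nil.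
  - via (k/(a*p0)) Hin.
    replace (k/(a*p0)) with (k*(1/p0)/a) by (field; neq).
    apply div_mono; [lra|]. apply Rmult_le_compat_l; [pos|exact HRm].
  - via (k/(a*t0)) Hin.
    apply div_le; [pos|pos|].
    apply (Rmult_le_compat_l (w+1)) in Htc1; [|lra].
    replace ((w+1)*(c/(w+1))) with c in Htc1 by (field; lra).
    replace (k*(w+1)*(a*t0)) with ((k*a)*((w+1)*t0)) by ring.
    replace (k*(a*c)) with ((k*a)*c) by ring.
    apply Rmult_le_compat_l; [pos|lra].
  - apply Rle_trans with (2 * Rmax (sqrt (k/(a*p0))) (sqrt (k*w*(w+1)^2*p0/q))).
    + apply sqrt_le_max; [pos|pos|lra|].
      replace (2^2) with 4 by ring. apply (t3_gen k q h a sa sW w p0); auto.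
    + apply Rmult_le_compat_l; [lra|]. apply Rmax_lub; apply Hin1; inlist.
  - destruct (Rmax_cases (w+1) m) as [E|E]; rewrite E.
    + destruct (Rle_lt_dec 1 (p0*(w+1))) as [H|H].
      * via (k*w*(w+1)^2*p0/q) Hin. apply div_mono; [lra|].
        replace (k*w*(w+1)^2*p0) with ((k*w*(w+1))*(p0*(w+1))) by ring.
        rewrite <- (Rmult_1_r (k*w*(w+1))) at 1. apply Rmult_le_compat_l; [pos|lra].
      * via (k*w/(q*p0)) Hin.
        replace (k*w/(q*p0)) with (k*w*(1/p0)/q) by (field; neq).
        apply div_mono; [lra|]. apply Rmult_le_compat_l; [pos|].
        apply le_div_r; lra.
    + via (k*w/(q*p0)) Hin.
      replace (k*w/(q*p0)) with (k*w*(1/p0)/q) by (field; neq).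
      apply div_mono; [lra|]. apply Rmult_le_compat_l; [pos|].
      eapply Rle_trans; [apply Rmax_r|exact HRm].
  - apply Hin; inlist.
  - apply Hin; inlist.
  - apply Rle_trans with (1/p0); [|apply Hin; inlist].
    eapply Rle_trans; [apply Rmax_r|exact HRm].
Qed.



Lemma Rpower_pos x y : 0 < Rpower x y.
Proof. unfold Rpower; apply exp_pos. Qed.

Lemma Rpower_cube x y : 0 < x -> (Rpower x y)^3 = Rpower x (y * 3).
Proof.
  intros Hx. rewrite <- Rpower_pow by apply Rpower_pos. rewrite Rpower_mult.
  f_equal. simpl; ring.
Qed.

Lemma cbrt_cube x : 0 < x -> (cbrt x)^3 = x.
Proof.
  intros Hx. unfold cbrt. rewrite Rpower_cube by auto.
  replace (1/3*3) with 1 by field. apply Rpower_1; auto.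
Qed.

Lemma r23_cube x : 0 < x -> (Rpower x (2/3))^3 = x^2.
Proof.
  intros Hx. rewrite Rpower_cube by auto.
  replace (2/3*3) with (INR 2) by (simpl; field). apply Rpower_pow; auto.
Qed.

Lemma r32 x : 0 < x -> Rpower x (3/2) = x * sqrt x.
Proof.
  intros Hx. replace (3/2) with (1 + /2) by field. rewrite Rpower_plus, Rpower_1, Rpower_sqrt; auto.
Qed.

Lemma sqrt_LLmax L Lmax nn : 0 < L -> 0 < Lmax -> 0 < nn ->
  sqrt (L*Lmax) = L * sqrt nn / sqrt (L*nn/Lmax).
Proof.
  intros HL HM Hn.
  assert (0 < sqrt (L*nn/Lmax)) by (apply sqrt_lt_R0; pos).
  apply (Rmult_eq_reg_r (sqrt (L*nn/Lmax))); [|lra].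
  replace (L * sqrt nn / sqrt (L*nn/Lmax) * sqrt (L*nn/Lmax)) with (L * sqrt nn) by (field; lra).
  rewrite <- sqrt_mult by pos.
  replace (L*Lmax*(L*nn/Lmax)) with ((L*L)*nn) by (field; lra).
  rewrite sqrt_mult by pos. rewrite sqrt_square by lra. reflexivity.
Qed.

Lemma cbrt_rel L Lmax nn : 0 < L -> 0 < Lmax -> 0 < nn ->
  Rpower L (2/3) * cbrt Lmax = L * cbrt nn / cbrt (L*nn/Lmax).
Proof.
  intros HL HM Hn.
  assert (0 < cbrt (L*nn/Lmax)) by apply Rpower_pos.
  apply (Rmult_eq_reg_r (cbrt (L*nn/Lmax))); [|lra].
  replace (L * cbrt nn / cbrt (L*nn/Lmax) * cbrt (L*nn/Lmax)) with (L * cbrt nn) by (field; lra).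
  rewrite Rmult_assoc. unfold cbrt. rewrite Rpower_mult_distr by pos.
  replace (Lmax * (L*nn/Lmax)) with (L*nn) by (field; lra).
  rewrite <- Rpower_mult_distr by pos. rewrite <- Rmult_assoc, <- Rpower_plus.
  replace (2/3 + 1/3) with 1 by field. rewrite Rpower_1; auto.
Qed.

Lemma Tfun_eq n L Lmax mu w a p t :
  (1 <= n)%nat -> 0 < L -> 0 < Lmax -> 0 < mu -> 0 < a -> 0 < p -> 0 < t -> 0 <= w ->
  Tfun n L Lmax mu w a p t =
  Tk (L/mu) (L*INR n/Lmax) (sqrt (L*INR n/Lmax)) a (sqrt (w+1)) w p t.
Proof.
  intros Hn HL HM Hmu Ha Hp Ht Hw.
  assert (Hnn : 1 <= INR n) by (apply (le_INR 1); auto).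
  assert (Hsn : 0 < sqrt (INR n)) by (apply sqrt_lt_R0; lra).
  assert (Hh : 0 < sqrt (L*INR n/Lmax)) by (apply sqrt_lt_R0; pos).
  assert (Hsp : 0 < sqrt p) by (apply sqrt_lt_R0; lra).
  unfold Tfun, Tk. cbv zeta. f_equal.
  rewrite (sqrt_LLmax L Lmax (INR n)) by lra.
  repeat (apply (f_equal2 (@cons R))); try reflexivity; f_equal; field; neq.
Qed.

Lemma Topt_eq n d r Kw Ka L Lmax mu w a :
  (1 <= n)%nat -> 0 < L -> 0 < Lmax -> 0 < mu -> 0 < a -> 0 <= w ->
  T_optimistic n d r Kw Ka L Lmax mu w a =
  Toptk (L/mu) (L*INR n/Lmax) (sqrt (L*INR n/Lmax)) (cbrt (L*INR n/Lmax)) a (sqrt a) (sqrt (w+1)) w (mur d r Kw Ka).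
Proof.
  intros Hn HL HM Hmu Ha Hw.
  assert (Hnn : 1 <= INR n) by (apply (le_INR 1); auto).
  assert (Hsn : 0 < sqrt (INR n)) by (apply sqrt_lt_R0; lra).
  assert (Hh : 0 < sqrt (L*INR n/Lmax)) by (apply sqrt_lt_R0; pos).
  assert (Hc : 0 < cbrt (L*INR n/Lmax)) by apply Rpower_pos.
  assert (Hcn : 0 < cbrt (INR n)) by apply Rpower_pos.
  assert (Hsa : 0 < sqrt a) by (apply sqrt_lt_R0; lra).
  unfold T_optimistic, Toptk. cbv zeta. f_equal.
  rewrite <- sqrt_mult by lra. rewrite (sqrt_LLmax L Lmax (INR n)) by lra.
  rewrite sqrt_mult by lra. rewrite r32 by lra.
  rewrite (cbrt_rel L Lmax (INR n)) by lra.
  repeat (apply (f_equal2 (@cons R))); try reflexivity; f_equal; field; neq.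
Qed.

Lemma p_opt_eq n d r Kw Ka L Lmax w a : 0 <= w ->
  p_opt n d r Kw Ka L Lmax w a =
  pk (cbrt (L*INR n/Lmax)) (sqrt (L*INR n/Lmax)) (sqrt a) (sqrt (w+1)) w (inv_mur d r Kw Ka).
Proof. intros Hw. unfold p_opt, pk. cbv zeta. rewrite r32 by lra. reflexivity. Qed.

Lemma tau_opt_eq n d r Kw Ka L Lmax w a :
  tau_opt n d r Kw Ka L Lmax w a =
  tk (cbrt (L*INR n/Lmax)) (Rpower (w+1) (2/3)) (cbrt (p_opt n d r Kw Ka L Lmax w a)) w.
Proof. unfold tau_opt, tk. cbv zeta. reflexivity. Qed.

Theorem theorem3 :
  exists C : R, 0 < C /\
  forall (n d : nat) (r omega alpha Kw Ka mu L Lmax : R),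
    (1 <= n)%nat -> (1 <= d)%nat ->
    0 <= r <= 1 -> 0 <= omega -> 0 < alpha <= 1 ->
    0 < Kw -> 0 < Ka ->
    0 < mu -> mu <= L -> L <= Lmax -> Lmax <= INR n * L ->
    let p0 := p_opt n d r Kw Ka L Lmax omega alpha in
    let t0 := tau_opt n d r Kw Ka L Lmax omega alpha in
    let T0 := Tfun n L Lmax mu omega alpha p0 t0 in
    let M0 := Mfun n d r Kw Ka L Lmax mu omega alpha p0 t0 in
    let Topt := T_optimistic n d r Kw Ka L Lmax mu omega alpha in
    (0 < p0 <= 1 /\ 0 < t0 <= 1 /\
     forall p tau, 0 < p <= 1 -> 0 < tau <= 1 ->
       M0 <= C * Mfun n d r Kw Ka L Lmax mu omega alpha p tau) /\
    (Topt <= C * T0 /\ T0 <= C * Topt) /\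
    (Kr r Kw Ka * Topt + INR d <= C * M0 /\
     M0 <= C * (Kr r Kw Ka * Topt + INR d)).
Proof.
  exists 4. split; [lra|].
  intros n d r w a Kw Ka mu L Lmax Hn Hd Hr Hw Ha HKw HKa Hmu HmuL HLM HMn p0 t0 T0 M0 Topt.
  assert (HL : 0 < L) by lra. assert (HM : 0 < Lmax) by lra.
  assert (Hnn : 1 <= INR n) by (apply (le_INR 1); auto).
  assert (Hdd : 0 <= INR d) by apply pos_INR.
  set (q := L*INR n/Lmax).
  assert (Hq : 1 <= q) by (unfold q; apply le_div_r; lra).
  set (k := L/mu). assert (Hk : 0 < k) by (unfold k; pos).
  set (h := sqrt q). assert (Hh : 0 < h) by (apply sqrt_lt_R0; lra).
  assert (Hh2 : h*h = q) by (apply sqrt_sqrt; lra).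
  set (c := cbrt q). assert (Hc : 0 < c) by apply Rpower_pos.
  assert (Hc3 : c^3 = q) by (apply cbrt_cube; lra).
  set (sa := sqrt a). assert (Hsa : 0 < sa) by (apply sqrt_lt_R0; lra).
  assert (Hsa2 : sa*sa = a) by (apply sqrt_sqrt; lra).
  set (sW := sqrt (w+1)). assert (HsW : 0 < sW) by (apply sqrt_lt_R0; lra).
  assert (HsW2 : sW*sW = w+1) by (apply sqrt_sqrt; lra).
  set (K := Kr r Kw Ka). assert (HK : 0 < K) by (unfold K, Kr; nra).
  set (m := mur d r Kw Ka). assert (Hm : 0 <= m) by (unfold m, mur; apply Rdiv_nneg; [pos|exact HK]).
  assert (HKm : K * m = r * INR d) by (unfold m, mur; change (Kr r Kw Ka) with K; field; lra).
  set (im := inv_mur d r Kw Ka).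
  assert (Him : 0 < im /\ im*m <= 1 /\ 1 <= im*Rmax 1 m).
  { unfold im, inv_mur. fold m. destruct (Req_EM_T m 0) as [E|E].
    - rewrite E. rewrite Rmax_left by lra. lra.
    - assert (0 < m) by lra. split; [apply Rdiv_lt_0_compat; lra|]. replace (1/m*m) with 1 by (field; lra). split; [lra|].
      apply Rle_trans with (1/m*m); [right; field; lra|]. apply Rmult_le_compat_l; [left; apply Rdiv_lt_0_compat; lra|apply Rmax_r]. }
  destruct Him as [Him [Himm Him1]].
  set (W23 := Rpower (w+1) (2/3)). assert (HW23 : 0 < W23) by apply Rpower_pos.
  assert (EW23 : W23^3 = (w+1)^2) by (apply r23_cube; lra).
  assert (Ep0 : p0 = pk c h sa sW w im) by (unfold p0; apply p_opt_eq; lra).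
  set (pc := cbrt p0).
  assert (Hc1 : 1 <= c) by (eapply c_ge1; eauto).
  assert (Hh1 : 1 <= h) by nra.
  destruct (p0_facts c h sa sW w im m) as [Hp0 [Hpim _]]; auto; try lra.
  rewrite <- Ep0 in Hp0, Hpim.
  assert (Hpc : 0 < pc) by apply Rpower_pos.
  assert (Epc : pc^3 = pk c h sa sW w im) by (rewrite <- Ep0; apply cbrt_cube; lra).
  assert (Et0 : t0 = tk c W23 pc w) by (unfold t0; apply tau_opt_eq).
  destruct (t0_facts c W23 pc w) as [Ht0 _]; auto; try lra.
  rewrite <- Et0 in Ht0.
  assert (ET0 : T0 = Tk k q h a sW w p0 t0) by (unfold T0; apply Tfun_eq; try assumption; lra).
  assert (ETopt : Topt = Toptk k q h c a sa sW w m) by (unfold Topt; apply Topt_eq; try assumption; lra).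
  assert (EM : forall p t, 0 < p -> 0 < t ->
     Mfun n d r Kw Ka L Lmax mu w a p t = K * (1 + p*m) * Tk k q h a sW w p t + INR d).
  { intros p t Hp Ht. unfold Mfun. rewrite Tfun_eq by (try assumption; lra). fold q k h sW. f_equal.
    f_equal. replace (K*(1+p*m)) with (K + p*(K*m)) by ring. rewrite HKm. unfold K, Kr. ring. }
  assert (HA : T0 <= Topt).
  { rewrite ET0, ETopt, Ep0, Et0. apply (A_bound k q h c a sa sW w m im pc W23); auto. }
  assert (HB : Topt <= 2 * T0).
  { rewrite ET0, ETopt, Ep0, Et0. apply (B_bound k q h c a sa sW w m im pc W23); auto. }
  assert (HT0 : 0 <= T0) by (rewrite ET0; apply Rmax_list_nonneg).
  assert (HEM0 : M0 = K * (1 + p0*m) * T0 + INR d) by (unfold M0; rewrite EM by lra; rewrite ET0; reflexivity).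
  assert (Hp0m : p0*m <= 1) by (apply Rle_trans with (im*m); [apply Rmult_le_compat_r; lra|lra]).
  assert (HF0 : 0 <= p0*m) by (apply Rmult_le_pos; lra).
  assert (HKT : K*(1+p0*m)*T0 <= 2*K*T0).
  { replace (2*K*T0) with (K*2*T0) by ring. apply Rmult_le_compat_r; [lra|]. apply Rmult_le_compat_l; lra. }
  assert (HKT' : K*T0 <= K*(1+p0*m)*T0).
  { replace (K*T0) with (K*1*T0) by ring. apply Rmult_le_compat_r; [lra|]. apply Rmult_le_compat_l; lra. }
  assert (HKA : K*T0 <= K*Topt) by (apply Rmult_le_compat_l; lra).
  assert (HKB : K*Topt <= 2*(K*T0)) by (replace (2*(K*T0)) with (K*(2*T0)) by ring; apply Rmult_le_compat_l; lra).
  split; [split; [exact Hp0|split; [exact Ht0|]]|split].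
  - intros p t Hp Ht. rewrite EM by lra. rewrite HEM0.
    assert (HC := C_bound k q h c a sa sW w m p t Hk Hq Hh Hh2 Hc Hc3 Ha Hsa Hsa2 Hw HsW HsW2 Hm Hp Ht).
    rewrite <- ETopt in HC.
    assert (K*Topt <= K*(2*(1+p*m)*Tk k q h a sW w p t)) by (apply Rmult_le_compat_l; lra).
    assert (0 <= K * (1 + p*m) * Tk k q h a sW w p t) by (apply Rmult_le_pos; [pos|apply Rmax_list_nonneg]).
    replace (K*(2*(1+p*m)*Tk k q h a sW w p t)) with (2*(K * (1 + p*m) * Tk k q h a sW w p t)) in H by ring.
    lra.
  - split; lra.
  - rewrite HEM0. split; lra.
Qed.
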